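(* Let $K$ be a field of characteristic not equal to $2$ and let $S$ be a (unital, not necessarily associative) $K$-algebra equipped with a pseudo-degree function $\chi$. Let $a \in N(S)$ with $m=\chi(a)>0$, and suppose that the centralizer $C_S(a)$ satisfies condition $D(\ell)$ for some positive integer $\ell$. Then the subalgebra $K[a]$ of $S$ generated by $a$ is isomorphic to a polynomial ring in one variable over $K$, and $C_S(a)$ is a free left $K[a]$-module of rank at most $\ell m$.
   Context: All algebras are unital but not necessarily associative, and $K$ is embedded in $S$ via the unit. For $a,b,c\in S$, the nucleus $N(S)$ is the set of $a\in S$ such that $a(bc)=(ab)c$, $(ba)c=b(ac)$ and $(bc)a=b(ca)$ for all $b,c\in S$ (i.e. $a$ lies in the left, middle and right nuclei). The centralizer $C_S(a)$ is the set of elements of $S$ commuting with $a$. A pseudo-degree function on $S$ is a map $\chi:S\to\mathbb{Z}\cup\{-\infty\}$ such that $\chi(x)=-\infty$ iff $x=0$; $\chi(xy)=\chi(x)+\chi(y)$ for all $x,y\in S$; and $\chi(x+y)\le\max(\chi(x),\chi(y))$ for all $x,y\in S$. For $K$ of characteristic not $2$ and a positive integer $\ell$, a subalgebra $B\subseteq S$ satisfies condition $D(\ell)$ if $\chi(b)\ge 0$ for all nonzero $b\in B$, and whenever $b_1,\dots,b_{\ell+1}\in B$ all satisfy $\chi(b_1)=\dots=\chi(b_{\ell+1})$, there exist $\alpha_1,\dots,\alpha_{\ell+1}\in K$, not all zero, with $\chi\left(\sum_{i=1}^{\ell+1}\alpha_i b_i\right)<\chi(b_1)$. *)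

(* Defs.v *)
From HB Require Import structures.
From mathcomp Require Import all_boot all_order all_algebra.
Set Implicit Arguments. Unset Strict Implicit. Unset Printing Implicit Defensive.
Import Order.TTheory GRing.Theory Num.Theory.
Local Open Scope ring_scope.

(* Unital, not necessarily associative K-algebra: a K-vector space with a
   K-bilinear multiplication and a two-sided unit. K embeds via k |-> k *: 1. *)
Record naalg (K : fieldType) := NAAlg {
  nacarrier :> lmodType K;
  namul : nacarrier -> nacarrier -> nacarrier;
  naone : nacarrier;
  namulDl : forall x y z, namul (x + y) z = namul x z + namul y z;
  namulDr : forall x y z, namul x (y + z) = namul x y + namul x z;
  namulZl : forall (k : K) x y, namul (k *: x) y = k *: namul x y;
  namulZr : forall (k : K) x y, namul x (k *: y) = k *: namul x y;
  namul1l : forall x, namul naone x = x;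
  namul1r : forall x, namul x naone = x
}.

Section Defs.
Variables (K : fieldType) (S : naalg K).
Local Notation "x ** y" := (namul x y) (at level 40, left associativity).

Definition in_nucleus (a : S) : Prop :=
  forall b c : S, a ** (b ** c) = (a ** b) ** c
               /\ (b ** a) ** c = b ** (a ** c)
               /\ (b ** c) ** a = b ** (c ** a).

Definition centralizer (a : S) : pred S := fun x => x ** a == a ** x.

Fixpoint napow (a : S) (n : nat) : S :=
  if n is n'.+1 then napow a n' ** a else naone S.

Definition naeval (a : S) (p : {poly K}) : S :=
  \sum_(i < size p) p`_i *: napow a i.

Definition is_subalg (B : S -> Prop) : Prop :=
  B (naone S)
  /\ (forall x y, B x -> B y -> B (x + y))
  /\ (forall (k : K) x, B x -> B (k *: x))
  /\ (forall x y, B x -> B y -> B (x ** y)).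

Definition gen_subalg (a : S) : S -> Prop :=
  fun x => forall B : S -> Prop, is_subalg B -> B a -> B x.

(* Z ∪ {-oo}, with None = -oo. *)
Definition degadd (x y : option int) : option int :=
  match x, y with Some m, Some n => Some (m + n) | _, _ => None end.
Definition degle (x y : option int) : bool :=
  match x, y with
  | None, _ => true
  | Some _, None => false
  | Some m, Some n => (m <= n)%R
  end.
Definition deglt (x y : option int) : bool :=
  match x, y with
  | _, None => false
  | None, Some _ => true
  | Some m, Some n => (m < n)%R
  end.
Definition degmax (x y : option int) : option int :=
  if degle x y then y else x.

Definition pseudo_degree (chi : S -> option int) : Prop :=
  (forall x, chi x = None <-> x = 0)
  /\ (forall x y, chi (x ** y) = degadd (chi x) (chi y))
  /\ (forall x y, degle (chi (x + y)) (degmax (chi x) (chi y))).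

Definition condD (chi : S -> option int) (l : nat) (B : pred S) : Prop :=
  (forall b, b \in B -> b != 0 -> degle (Some 0) (chi b))
  /\ (forall b : 'I_l.+1 -> S,
        (forall i, b i \in B) -> (forall i, b i != 0) ->
        (forall i, chi (b i) = chi (b ord0)) ->
        exists alpha : 'I_l.+1 -> K,
          (exists i, alpha i != 0)
          /\ deglt (chi (\sum_i alpha i *: b i)) (chi (b ord0))).

End Defs.

(* Main.v *)
Require Import Defs.
From HB Require Import structures.
From mathcomp Require Import all_boot all_order all_algebra.
From mathcomp Require Import zify.
From Stdlib Require Import Classical FunctionalExtensionality.
Set Implicit Arguments. Unset Strict Implicit. Unset Printing Implicit Defensive.
Import Order.TTheory GRing.Theory Num.Theory.
Local Open Scope ring_scope.

Section Basic.
Variables (K : fieldType) (S : naalg K).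
Local Notation "x ** y" := (namul x y) (at level 40, left associativity).

Lemma mul0l (x : S) : 0 ** x = 0.
Proof. by have := namulZl 0 0 x; rewrite !scale0r. Qed.
Lemma mul0r (x : S) : x ** 0 = 0.
Proof. by have := namulZr 0 x 0; rewrite !scale0r. Qed.
Lemma mulNl (x y : S) : (- x) ** y = - (x ** y).
Proof. by rewrite -scaleN1r namulZl scaleN1r. Qed.
Lemma mulNr (x y : S) : x ** (- y) = - (x ** y).
Proof. by rewrite -scaleN1r namulZr scaleN1r. Qed.
Lemma mulBl (x y z : S) : (x - y) ** z = x ** z - y ** z.
Proof. by rewrite namulDl mulNl. Qed.
Lemma mulBr (x y z : S) : x ** (y - z) = x ** y - x ** z.
Proof. by rewrite namulDr mulNr. Qed.
Lemma mul_suml (I : Type) (r : seq I) (P : pred I) (F : I -> S) (y : S) :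
  (\sum_(i <- r | P i) F i) ** y = \sum_(i <- r | P i) (F i ** y).
Proof. exact: (big_morph _ (fun u v => namulDl u v y) (mul0l y)). Qed.
Lemma mul_sumr (I : Type) (r : seq I) (P : pred I) (F : I -> S) (y : S) :
  y ** (\sum_(i <- r | P i) F i) = \sum_(i <- r | P i) (y ** F i).
Proof. exact: (big_morph _ (namulDr y) (mul0r y)). Qed.

Lemma inC (a x : S) : (x \in centralizer a) = (x ** a == a ** x).
Proof. by []. Qed.

Lemma degle_refl x : degle x x.
Proof. by case: x => //= ?; lia. Qed.
Lemma degle_trans x y z : degle x y -> degle y z -> degle x z.
Proof. by case: x; case: y; case: z => //= *; lia. Qed.
Lemma degle_max x y z : degle x z -> degle y z -> degle (degmax x y) z.
Proof. by rewrite /degmax; case: ifP. Qed.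
Lemma deglt_neg x y : deglt x y = ~~ degle y x.
Proof. by case: x; case: y => //= *; lia. Qed.
Lemma deglt_le x y : deglt x y -> degle x y.
Proof. by case: x; case: y => //= *; lia. Qed.
Lemma degle_lt_trans x y z : degle x y -> deglt y z -> deglt x z.
Proof. by case: x; case: y; case: z => //= *; lia. Qed.
Lemma deglt_le_trans x y z : deglt x y -> degle y z -> deglt x z.
Proof. by case: x; case: y; case: z => //= *; lia. Qed.
Lemma degle_anti x y : degle x y -> degle y x -> x = y.
Proof. by case: x; case: y => //= u v *; congr Some; lia. Qed.
Lemma degle_eqVlt x y : degle x y -> x = y \/ deglt x y.
Proof.
case: x; case: y => //=.
- move=> u v H. case: (ltgtP v u) => H2; [by right|lia|by left; congr Some].
- by move=> u _; right.
- by left.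
Qed.

End Basic.
Section Eval.
Variables (K : fieldType) (S : naalg K) (a : S).
Hypothesis (Ha : in_nucleus a).
Local Notation "x ** y" := (namul x y) (at level 40, left associativity).
Local Notation "a ^^ n" := (napow a n) (at level 29).

Lemma naevalE (p : {poly K}) n : (size p <= n)%N ->
  naeval a p = \sum_(i < n) p`_i *: a ^^ i.
Proof.
move=> Hn; rewrite /naeval (big_ord_widen n (fun i => p`_i *: a ^^ i) Hn).
rewrite big_mkcond /=; apply: eq_bigr => i _; case: ifP => // /negbT.
by rewrite -leqNgt => Hi; rewrite nth_default // scale0r.
Qed.
Lemma naeval_lin k (p q : {poly K}) : naeval a (k *: p + q) = k *: naeval a p + naeval a q.
Proof.
set n := maxn (size p) (size q).
have Hp : (size p <= n)%N by rewrite leq_maxl.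
have Hq : (size q <= n)%N by rewrite leq_maxr.
have Hpq : (size (k *: p + q)%R <= n)%N.
  apply: leq_trans (size_polyD _ _) _; rewrite geq_max Hq andbT.
  exact: leq_trans (size_scale_leq _ _) Hp.
rewrite !(naevalE Hp) (naevalE Hq) (naevalE Hpq) scaler_sumr -big_split /=.
by apply: eq_bigr => i _; rewrite coefD coefZ scalerDl scalerA.
Qed.
Lemma naeval0 : naeval a 0 = 0.
Proof. by rewrite (naevalE (n:=0)) ?size_poly0 /= ?big_ord0. Qed.
Lemma naevalD p q : naeval a (p + q) = naeval a p + naeval a q.
Proof. by have := naeval_lin 1 p q; rewrite !scale1r. Qed.
Lemma naevalZ k p : naeval a (k *: p) = k *: naeval a p.
Proof. by have := naeval_lin k p 0; rewrite !addr0 naeval0 addr0. Qed.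
Lemma naevalN p : naeval a (- p) = - naeval a p.
Proof. by have := naevalZ (-1) p; rewrite !scaleN1r. Qed.
Lemma naevalB p q : naeval a (p - q) = naeval a p - naeval a q.
Proof. by rewrite naevalD naevalN. Qed.
Lemma naeval_sum (I : Type) (r : seq I) (P : pred I) (F : I -> {poly K}) :
  naeval a (\sum_(i <- r | P i) F i) = \sum_(i <- r | P i) naeval a (F i).
Proof. exact: (big_morph _ naevalD naeval0). Qed.
Lemma naevalXn c n : naeval a (c *: 'X^n) = c *: a ^^ n.
Proof.
rewrite naevalZ (naevalE (n := n.+1)) ?size_polyXn // big_ord_recr /= big1.
  by rewrite add0r coefXn eqxx scale1r.
by move=> i _; rewrite coefXn /= (ltn_eqF (ltn_ord i)) scale0r.
Qed.
Lemma naeval1 : naeval a 1 = naone S.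
Proof. by have := naevalXn 1 0; rewrite expr0 !scale1r. Qed.
Lemma naevalX : naeval a 'X = a.
Proof. by have := naevalXn 1 1; rewrite expr1 !scale1r /= namul1l. Qed.

Lemma pow_add' i j : a ^^ i ** a ^^ j = a ^^ (i + j).
Proof.
elim: j => [|j IH]; first by rewrite /= namul1r addn0.
by rewrite addnS /= -IH; case: (Ha (a ^^ i) (a ^^ j)) => _ [_ ->].
Qed.

Lemma poly_expand (p : {poly K}) : p = \sum_(i < size p) p`_i *: 'X^i.
Proof. by rewrite -{1}[p]coefK poly_def. Qed.

Lemma naeval_mul p q : naeval a (p * q) = naeval a p ** naeval a q.
Proof.
rewrite [in LHS](poly_expand p) [in LHS](poly_expand q) mulr_suml naeval_sum.
rewrite [naeval a p]/naeval mul_suml; apply: eq_bigr => i _.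
rewrite mulr_sumr naeval_sum [naeval a q]/naeval mul_sumr; apply: eq_bigr => j _.
by rewrite -scalerAr -scalerAl -exprD scalerA naevalXn namulZl namulZr pow_add' scalerA mulrC.
Qed.

End Eval.
Section Main.
Variables (K : fieldType) (S : naalg K) (chi : S -> option int) (a : S) (m l : nat).
Hypotheses (Hchi : pseudo_degree chi) (Ha : in_nucleus a)
  (Hchia : chi a = Some (m%:Z)) (Hm : (0 < m)%N) (HD : condD chi l (centralizer a)).
Local Notation "x ** y" := (namul x y) (at level 40, left associativity).
Local Notation "a ^^ n" := (napow a n) (at level 29).
Local Notation C := (centralizer a).

Lemma pow_add i j : a ^^ i ** a ^^ j = a ^^ (i + j).
Proof.
elim: j => [|j IH]; first by rewrite /= namul1r addn0.
by rewrite addnS /= -IH; case: (Ha (a ^^ i) (a ^^ j)) => _ [_ ->].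
Qed.
Lemma pow1 : a ^^ 1 = a.
Proof. by rewrite /= namul1l. Qed.
Lemma pow_comm n : a ^^ n ** a = a ** a ^^ n.
Proof. by have := pow_add n 1; have := pow_add 1 n; rewrite !pow1 addnC => -> ->. Qed.
Lemma pow_left k y z : a ^^ k ** (y ** z) = (a ^^ k ** y) ** z.
Proof.
elim: k y z => [|k IH] y z /=; first by rewrite !namul1l.
case: (Ha (a ^^ k) (y ** z)) => _ [-> _].
case: (Ha y z) => -> _.
by rewrite IH; case: (Ha (a ^^ k) y) => _ [-> _].
Qed.
Lemma pow_mulA k n c : a ^^ k ** (a ^^ n ** c) = a ^^ (k + n) ** c.
Proof. by rewrite pow_left pow_add. Qed.

Lemma inC0 : (0 : S) \in C.
Proof. by rewrite inC mul0l mul0r. Qed.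
Lemma inCD x y : x \in C -> y \in C -> x + y \in C.
Proof. by rewrite !inC namulDl namulDr => /eqP -> /eqP ->. Qed.
Lemma inCZ k x : x \in C -> k *: x \in C.
Proof. by rewrite !inC namulZl namulZr => /eqP ->. Qed.
Lemma inCN x : x \in C -> - x \in C.
Proof. by rewrite -scaleN1r; apply: inCZ. Qed.
Lemma inC_sum (I : Type) (r : seq I) (P : pred I) (F : I -> S) :
  (forall i, P i -> F i \in C) -> \sum_(i <- r | P i) F i \in C.
Proof. move=> H; apply: (big_ind (fun x => x \in C)) => //; [exact: inC0|exact: inCD]. Qed.
Lemma inC_pow n c : c \in C -> a ^^ n ** c \in C.
Proof.
rewrite !inC => /eqP Hc.
case: (Ha (a ^^ n) c) => _ [_ ->]. rewrite Hc pow_left pow_comm.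
by case: (Ha (a ^^ n) c) => -> _.
Qed.
Lemma inC1 : naone S \in C.
Proof. by rewrite inC namul1l namul1r. Qed.

Lemma chi0 : chi 0 = None.
Proof. by case: Hchi => H _; apply/H. Qed.
Lemma chiNone x : (chi x = None) <-> x = 0.
Proof. by case: Hchi. Qed.
Lemma chiM x y : chi (x ** y) = degadd (chi x) (chi y).
Proof. by case: Hchi => _ []. Qed.
Lemma chiD x y : degle (chi (x + y)) (degmax (chi x) (chi y)).
Proof. by case: Hchi => _ []. Qed.
Lemma a_neq0 : a != 0.
Proof. by apply/eqP => /chiNone; rewrite Hchia. Qed.
Lemma one_neq0 : naone S != 0.
Proof. by apply: contraNneq a_neq0 => H; rewrite -(namul1l a) H mul0l. Qed.
Lemma chi1 : chi (naone S) = Some 0.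
Proof.
have := chiM (naone S) (naone S); rewrite namul1l.
case E: (chi (naone S)) => [u|] /=; last by move/chiNone: E; move/eqP: one_neq0.
by case=> H; congr Some; lia.
Qed.
Lemma chiK (k : K) : k != 0 -> chi (k *: naone S) = Some 0.
Proof.
move=> k0; case: HD => Hpos _.
have inv1 : (k *: naone S) ** (k^-1 *: naone S) = naone S.
  by rewrite namulZl namulZr namul1l scalerA divff // scale1r.
have nz c : c != 0 -> c *: naone S != 0.
  by move=> c0; rewrite scaler_eq0 negb_or c0 one_neq0.
have := Hpos _ (inCZ k inC1) (nz _ k0).
have := Hpos _ (inCZ k^-1 inC1) (nz _ (invr_neq0 k0)).
have := chiM (k *: naone S) (k^-1 *: naone S); rewrite inv1 chi1.
case: (chi (k *: naone S)) => [u|] //; case: (chi (k^-1 *: naone S)) => [v|] //= [] *.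
congr Some; lia.
Qed.
Lemma chiZ (k : K) x : k != 0 -> chi (k *: x) = chi x.
Proof.
move=> k0; rewrite -{1}(namul1l x) -namulZl chiM chiK //=.
by case: (chi x) => //= u; rewrite add0r.
Qed.
Lemma chiN x : chi (- x) = chi x.
Proof. by rewrite -scaleN1r chiZ // oppr_eq0 oner_neq0. Qed.
Lemma chi_sum_le (I : Type) (r : seq I) (P : pred I) (F : I -> S) B :
  (forall i, P i -> degle (chi (F i)) B) -> degle (chi (\sum_(i <- r | P i) F i)) B.
Proof.
move=> H; apply: (big_ind (fun s => degle (chi s) B)) => //; first by rewrite chi0.
move=> x y Hx Hy; apply: degle_trans (chiD x y) _; exact: degle_max.
Qed.
Lemma chi_sum_lt (I : Type) (r : seq I) (P : pred I) (F : I -> S) (D : int) :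
  (forall i, P i -> deglt (chi (F i)) (Some D)) -> deglt (chi (\sum_(i <- r | P i) F i)) (Some D).
Proof.
move=> H.
have : degle (chi (\sum_(i <- r | P i) F i)) (Some (D - 1)).
  apply: chi_sum_le => i /H; case: (chi (F i)) => //= u; lia.
case: (chi _) => //= u; lia.
Qed.
Lemma chiD_lt x y : deglt (chi y) (chi x) -> chi (x + y) = chi x.
Proof.
move=> Hlt.
have H1 : degle (chi (x + y)) (chi x).
  apply: degle_trans (chiD x y) _; apply: degle_max; [exact: degle_refl|exact: deglt_le].
have H2 := chiD (x + y) (- y); rewrite addrK chiN in H2.
case: (degle_eqVlt H1) => // H3; exfalso.
move: H2; rewrite /degmax; case: ifP => _.
- by move=> H4; move: (degle_lt_trans H4 Hlt); rewrite deglt_neg degle_refl.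
- by move=> H4; move: (degle_lt_trans H4 H3); rewrite deglt_neg degle_refl.
Qed.
Lemma chiD_lt' x y : deglt (chi y) (chi x) -> chi (y + x) = chi x.
Proof. by rewrite addrC; apply: chiD_lt. Qed.
Lemma chi_pow n : chi (a ^^ n) = Some (n * m)%N%:Z.
Proof.
elim: n => [|n IH] /=; first by rewrite chi1 mul0n.
by rewrite chiM IH Hchia /=; congr Some; rewrite mulSn; lia.
Qed.
Lemma chi_powM n x : chi (a ^^ n ** x) = degadd (Some (n * m)%N%:Z) (chi x).
Proof. by rewrite chiM chi_pow. Qed.


Lemma chiZle (k : K) x B : degle (chi x) B -> degle (chi (k *: x)) B.
Proof. by have [->|k0] := eqVneq k 0; rewrite ?scale0r ?chi0 ?chiZ. Qed.

Lemma naeval_split (p : {poly K}) : p != 0 ->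
  naeval a p = \sum_(i < (size p).-1) p`_i *: a ^^ i + lead_coef p *: a ^^ (size p).-1.
Proof.
move=> p0; have sp : size p = (size p).-1.+1 by rewrite prednK // size_poly_gt0.
rewrite (@naevalE _ _ a p (size p).-1.+1); last by rewrite -sp.
rewrite big_ord_recr lead_coefE /=.
by [].

Qed.
Lemma rest_lt (p : {poly K}) :
  deglt (chi (\sum_(i < (size p).-1) p`_i *: a ^^ i)) (Some ((size p).-1 * m)%N%:Z).
Proof.
apply: chi_sum_lt => i _; have [->|pi0] := eqVneq p`_i 0; first by rewrite scale0r chi0.
rewrite chiZ // chi_pow /= ltz_nat ltn_pmul2r //.
Qed.
Lemma chi_eval (p : {poly K}) : p != 0 -> chi (naeval a p) = Some ((size p).-1 * m)%N%:Z.
Proof.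
move=> p0; have lc0 : lead_coef p != 0 by rewrite lead_coef_eq0.
have H : chi (lead_coef p *: a ^^ (size p).-1) = Some ((size p).-1 * m)%N%:Z.
  by rewrite chiZ // chi_pow.
have Hlt := rest_lt p; rewrite -H in Hlt.
by rewrite naeval_split // (chiD_lt' Hlt) H.
Qed.
Lemma lead_rem (p : {poly K}) : p != 0 ->
  deglt (chi (naeval a p - lead_coef p *: a ^^ (size p).-1)) (Some ((size p).-1 * m)%N%:Z).
Proof. by move=> p0; rewrite naeval_split // addrK; apply: rest_lt. Qed.
Lemma naeval_inj : injective (naeval a).
Proof.
move=> p q E; apply/eqP; rewrite -subr_eq0; apply/negPn/negP => H.
by have := chi_eval H; rewrite naevalB E subrr chi0.
Qed.
Lemma naeval_eq0 p : (naeval a p == 0) = (p == 0).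
Proof.
apply/eqP/eqP => [|->]; last exact: naeval0.
by move=> H; apply: naeval_inj; rewrite H naeval0.
Qed.

Definition dg (x : S) : nat := if chi x is Some z then `|z|%N else 0%N.
Lemma chiC x : x \in C -> x != 0 -> chi x = Some (dg x)%:Z.
Proof.
move=> xC x0; case: HD => Hpos _; have := Hpos x xC x0; rewrite /dg.
case E: (chi x) => [z|] //=.
by move=> z0; congr Some; lia.
Qed.

Lemma chi_evalM p x : p != 0 ->
  chi (naeval a p ** x) = degadd (Some ((size p).-1 * m)%N%:Z) (chi x).
Proof. by move=> p0; rewrite chiM chi_eval. Qed.

Lemma deglt_add u s t : deglt u (Some s) -> deglt (degadd u (Some t)) (Some (s + t)).
Proof. by case: u => //= v; lia. Qed.
Lemma chi_add_lt u v B : deglt (chi u) B -> deglt (chi v) B -> deglt (chi (u + v)) B.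
Proof.
move=> Hu Hv; apply: degle_lt_trans (chiD u v) _.
by rewrite /degmax; case: ifP.
Qed.


Definition Tm r (c : 'I_r -> S) (p : 'I_r -> {poly K}) i := naeval a (p i) ** c i.
Definition span r (c : 'I_r -> S) (x : S) :=
  exists p : 'I_r -> {poly K}, x = \sum_i Tm c p i.
Definition good r (c : 'I_r -> S) :=
  (forall i, c i != 0) /\
  forall (p : 'I_r -> {poly K}) (D : int),
    (forall i, degle (chi (Tm c p i)) (Some D)) ->
    (exists i, chi (Tm c p i) = Some D) ->
    chi (\sum_i Tm c p i) = Some D.

Lemma span0 r (c : 'I_r -> S) : span c 0.
Proof. by exists (fun _ => 0); rewrite big1 // => i _; rewrite /Tm naeval0 mul0l. Qed.
Lemma spanD r (c : 'I_r -> S) x y : span c x -> span c y -> span c (x + y).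
Proof.
move=> [p ->] [q ->]; exists (fun i => p i + q i); rewrite -big_split /=.
by apply: eq_bigr => i _; rewrite /Tm naevalD namulDl.
Qed.
Lemma spanZ r (c : 'I_r -> S) k x : span c x -> span c (k *: x).
Proof.
move=> [p ->]; exists (fun i => k *: p i); rewrite scaler_sumr.
by apply: eq_bigr => i _; rewrite /Tm naevalZ namulZl.
Qed.
Lemma spanN r (c : 'I_r -> S) x : span c x -> span c (- x).
Proof. by rewrite -scaleN1r; apply: spanZ. Qed.

Lemma chi_Tm r (c : 'I_r -> S) p i : chi (Tm c p i) = None \/
  (p i != 0 /\ chi (Tm c p i) = degadd (Some ((size (p i)).-1 * m)%N%:Z) (chi (c i))).
Proof.
have [E|E] := eqVneq (p i) 0; first by left; rewrite /Tm E naeval0 mul0l chi0.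
by right; split => //; rewrite /Tm chi_evalM.
Qed.

Lemma good_bound r (c : 'I_r -> S) : good c -> (forall i, c i \in C) -> (r <= l * m)%N.
Proof.
move=> [nz Hg] HC; rewrite leqNgt; apply/negP => Hr.
pose d i := dg (c i).
have Hd i : chi (c i) = Some (d i)%:Z by apply: chiC.
pose f i : 'I_m := Ordinal (ltn_pmod (d i) Hm).
have : [exists j : 'I_m, (l < #|[pred i | f i == j]|)%N].
  apply: NNPP => /negP; rewrite negb_exists => /forallP H.
  move: Hr; rewrite ltnNge => /negP; apply.
  rewrite -{1}[r]card_ord -sum1_card (partition_big f predT) //=.
  apply: leq_trans (_ : (\sum_(j < m) l <= _)%N); last by rewrite big_const_ord iter_addn_0 mulnC.
  apply: leq_sum => j _; rewrite sum1_card.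
  by have := H j; rewrite -leqNgt.
case/existsP => j hA.
pose A := [pred i | f i == j].
pose g (k : 'I_l.+1) : 'I_r := enum_val (widen_ord hA k).
have g_inj : injective g.
  by move=> k1 k2 /enum_val_inj /(congr1 val) /= /val_inj.
have gA k : f (g k) == j by have := enum_valP (widen_ord hA k).
pose N := \max_(i : 'I_r) d i.
pose q i := (d i %/ m)%N.
have dd k : d (g k) = (q (g k) * m + j)%N.
  by rewrite /q {1}(divn_eq (d (g k)) m); move/eqP: (gA k) => <-.
have qN k : (q (g k) <= N)%N.
  exact: leq_trans (leq_div _ _) (leq_bigmax (g k)).
pose e k := (N - q (g k))%N.
pose b k := a ^^ (e k) ** c (g k).
have Hb k : chi (b k) = Some (N * m + j)%N%:Z.
  rewrite /b chi_powM Hd /=; congr Some; rewrite -PoszD; congr Posz.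
  rewrite /e dd; have := qN k; nia.
have bC k : b k \in C by apply: inC_pow.
have bnz k : b k != 0 by apply/eqP => /chiNone; rewrite Hb.
case: HD => _ HD2.
have [alpha [[k0 ak0] Hlt]] := HD2 b bC bnz (fun k => etrans (Hb k) (esym (Hb ord0))).
pose p i := \sum_(k | g k == i) alpha k *: 'X^(e k).
have HT i : Tm c p i = \sum_(k | g k == i) alpha k *: b k.
  rewrite /Tm naeval_sum mul_suml; apply: eq_bigr => k /eqP <-.
  by rewrite naevalXn namulZl.
have Hsum : \sum_i Tm c p i = \sum_k alpha k *: b k.
  rewrite (partition_big g predT) //=; apply: eq_bigr => i _; by rewrite HT.
have := Hg p (N * m + j)%N%:Z.
rewrite Hsum; move: Hlt; rewrite Hb => Hlt Hc.
suff : chi (\sum_k alpha k *: b k) = Some (N * m + j)%N%:Z by move=> E; rewrite E /= ltxx in Hlt.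
apply: Hc.
- move=> i; rewrite HT; apply: chi_sum_le => k _; apply: chiZle; rewrite Hb; exact: degle_refl.
- exists (g k0); rewrite HT (big_pred1 k0) ?chiZ ?Hb //.
  by move=> k; apply/eqP/eqP => [/g_inj|->].
Qed.


Definition ext r (c : 'I_r -> S) (x : S) : 'I_r.+1 -> S :=
  fun i => if unlift ord0 i is Some j then c j else x.
Lemma ext_lift r (c : 'I_r -> S) x j : ext c x (lift ord0 j) = c j.
Proof. by rewrite /ext liftK. Qed.
Lemma ext0 r (c : 'I_r -> S) x : ext c x ord0 = x.
Proof. by rewrite /ext unlift_none. Qed.

Lemma span_ext r (c : 'I_r -> S) x y : span c y -> span (ext c x) y.
Proof.
move=> [p ->]; exists (fun i => if unlift ord0 i is Some j then p j else 0).
rewrite big_ord_recl /Tm unlift_none naeval0 mul0l add0r.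
by apply: eq_bigr => j _; rewrite liftK ext_lift.
Qed.

Lemma sum_ext r (c : 'I_r -> S) x (p : 'I_r.+1 -> {poly K}) :
  \sum_i Tm (ext c x) p i =
  naeval a (p ord0) ** x + \sum_j Tm c (fun j => p (lift ord0 j)) j.
Proof.
rewrite big_ord_recl /Tm ext0; congr (_ + _).
by apply: eq_bigr => j _; rewrite ext_lift.
Qed.

Lemma good_ext r (c : 'I_r -> S) x :
  good c -> (forall i, c i \in C) -> x \in C -> ~ span c x ->
  (forall y, y \in C -> ~ span c y -> degle (chi x) (chi y)) ->
  (forall i, degle (chi (c i)) (chi x)) ->
  good (ext c x).
Proof.
move=> [nz Hg] HC xC xs Hmin Hcx.
have x0 : x != 0 by apply/eqP => E; apply: xs; rewrite E; apply: span0.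
split.
  by move=> i; rewrite /ext; case: unliftP => [j _|_].
move=> p' D Hle [i0 Hi0].
rewrite sum_ext.
set q := p' ord0; set p := fun j => p' (lift ord0 j).
set X0 := naeval a q ** x; set S0 := \sum_j Tm c p j.
have Hle0 : degle (chi X0) (Some D) by have := Hle ord0; rewrite /Tm ext0.
have Hlej j : degle (chi (Tm c p j)) (Some D).
  by have := Hle (lift ord0 j); rewrite /Tm ext_lift.
case: (degle_eqVlt Hle0) => HX0; last first.
  have [j0 Ej0] : exists j0, i0 = lift ord0 j0.
    move: Hi0; case: (unliftP ord0 i0) => [j ->|E]; first by exists j.
    by rewrite E /Tm ext0 -/X0 => E'; rewrite E' /= ltxx in HX0.
  have HS0 : chi S0 = Some D.
    apply: Hg => //; exists j0; by move: Hi0; rewrite Ej0 /Tm ext_lift.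
  by rewrite chiD_lt' // HS0.
have Hsum : degle (chi (X0 + S0)) (Some D).
  apply: degle_trans (chiD _ _) _; apply: degle_max => //.
  exact: chi_sum_le.
case: (degle_eqVlt Hsum) => // Hs; exfalso.
have q0 : q != 0 by apply/eqP => E; move: HX0; rewrite /X0 E naeval0 mul0l chi0.
set k := (size q).-1; set lam := lead_coef q.
have lam0 : lam != 0 by rewrite lead_coef_eq0.
have Hx := chiC xC x0; set dx := dg x in Hx.
have HD0 : D = (k * m + dx)%N%:Z.
  by move: HX0; rewrite /X0 chi_evalM // Hx /= => [[<-]].
pose mu j := if chi (Tm c p j) == Some D then lead_coef (p j) else 0.
pose e j := ((size (p j)).-1 - k)%N.
pose y := lam *: x + \sum_j mu j *: (a ^^ (e j) ** c j).
have Cl1 : deglt (chi (X0 - lam *: (a ^^ k ** x))) (Some D).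
  rewrite /X0 -namulZl -mulBl chiM Hx HD0 PoszD.
  exact: deglt_add (lead_rem q0).
have Cl2 j : deglt (chi (Tm c p j - mu j *: (a ^^ k ** (a ^^ (e j) ** c j)))) (Some D).
  rewrite /mu; case: eqP => E; last first.
    rewrite scale0r subr0; case: (degle_eqVlt (Hlej j)) => //.
  have pj0 : p j != 0 by apply/eqP => E'; move: E; rewrite /Tm E' naeval0 mul0l chi0.
  have cj0 := nz j; have Hcj := chiC (HC j) cj0.
  move: E; rewrite /Tm chi_evalM // Hcj /= HD0 => -[] E.
  have Hdj : (dg (c j) <= dx)%N by have := Hcx j; rewrite Hcj Hx /=; lia.
  have Hk : (k <= (size (p j)).-1)%N.
    rewrite -(leq_pmul2r Hm); move: E Hdj; move: ((size (p j)).-1 * m)%N (k * m)%N (dg (c j)) => u v w; lia.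
  rewrite pow_mulA /e subnKC // -namulZl -mulBl chiM Hcj -E PoszD.
  exact: deglt_add (lead_rem pj0).
have Cl3 : a ^^ k ** y = lam *: (a ^^ k ** x) + \sum_j mu j *: (a ^^ k ** (a ^^ (e j) ** c j)).
  rewrite /y namulDr namulZr mul_sumr; congr (_ + _).
  by apply: eq_bigr => j _; rewrite namulZr.
have Hdiff : X0 + S0 - a ^^ k ** y = (X0 - lam *: (a ^^ k ** x)) +
    \sum_j (Tm c p j - mu j *: (a ^^ k ** (a ^^ (e j) ** c j))).
  by rewrite Cl3 sumrB opprD addrACA.
have Hd : deglt (chi (X0 + S0 - a ^^ k ** y)) (Some D).
  by rewrite Hdiff; apply: chi_add_lt => //; apply: chi_sum_lt.
have Hky : deglt (chi (a ^^ k ** y)) (Some D).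
  have -> : a ^^ k ** y = (X0 + S0) - (X0 + S0 - a ^^ k ** y) by rewrite opprB addrC subrK.
  by apply: chi_add_lt; rewrite ?chiN.
have yC : y \in C.
  apply: inCD; first exact: inCZ.
  by apply: inC_sum => j _; apply/inCZ/inC_pow.
have ys : ~ span c y.
  move=> Hy; apply: xs.
  have Hsp : span c (\sum_j mu j *: (a ^^ (e j) ** c j)).
    exists (fun j => mu j *: 'X^(e j)); apply: eq_bigr => j _.
    by rewrite /Tm naevalXn namulZl.
  have -> : x = lam^-1 *: (y - \sum_j mu j *: (a ^^ (e j) ** c j)).
    by rewrite /y addrK scalerA mulVf // scale1r.
  by apply/spanZ/spanD => //; apply: spanN.
have y0 : y != 0 by apply/eqP => E; apply: ys; rewrite E; apply: span0.
have := Hmin y yC ys; rewrite Hx (chiC yC y0) /=.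
move: Hky; rewrite chi_powM (chiC yC y0) HD0 /=; lia.
Qed.


Lemma exists_min (P : S -> Prop) :
  (forall y, P y -> y \in C /\ y != 0) -> (exists y, P y) ->
  exists x, P x /\ forall y, P y -> degle (chi x) (chi y).
Proof.
move=> HP [y0 Py0]; apply: NNPP => Hno.
have desc y : P y -> exists y', P y' /\ (dg y' < dg y)%N.
  move=> Py; apply: NNPP => H1; apply: Hno; exists y; split => // z Pz.
  apply: NNPP => H2; apply: H1; exists z; split => //.
  have [zC z0] := HP z Pz; have [yC y0'] := HP y Py.
  move: H2; rewrite (chiC zC z0) (chiC yC y0') /=; lia.
suff : forall N y, P y -> (dg y <= N)%N -> False by move/(_ _ y0 Py0 (leqnn _)).
elim=> [|N IH] y Py Hy.
  by have [y' [_ H]] := desc y Py; lia.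
have [y' [Py' Hlt]] := desc y Py; apply: (IH y') => //; lia.
Qed.

Lemma build n : exists r (c : 'I_r -> S),
  good c /\ (forall i, c i \in C) /\
  (forall i y, y \in C -> ~ span c y -> degle (chi (c i)) (chi y)) /\
  (r = n \/ forall y, y \in C -> span c y).
Proof.
elim: n => [|n [r [c [Hg [HC [Hinv Hor]]]]]].
  exists 0%N, (fun _ => 0); split; last by split; [case|split; [case|left]].
  by split; [case|move=> p D _ [[]]].
case: (classic (forall y, y \in C -> span c y)) => Hall.
  by exists r, c; split => //; split => //; split => //; right.
case: Hor => // Er.
have [y0 Hy0] : exists y, y \in C /\ ~ span c y.
  apply: NNPP => H; apply: Hall => y yC; apply: NNPP => ys; apply: H; by exists y.
have Hm0 : forall y, (y \in C /\ ~ span c y) -> y \in C /\ y != 0.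
  move=> y [yC ys]; split => //; apply/eqP => E; apply: ys; rewrite E; exact: span0.
have [x [[xC xs] Hx]] := @exists_min (fun y => y \in C /\ ~ span c y) Hm0 (ex_intro _ y0 Hy0).
exists r.+1, (ext c x); split.
  apply: good_ext => // [y yC ys|i]; first exact: Hx.
  exact: Hinv i x xC xs.
split.
  by move=> i; rewrite /ext; case: unliftP => [j _|_].
split; last by left; rewrite Er.
move=> i y yC ys.
have ys' : ~ span c y by move=> H; apply: ys; apply: span_ext.
rewrite /ext; case: unliftP => [j _|_]; first exact: Hinv.
exact: Hx.
Qed.

Lemma good_indep r (c : 'I_r -> S) (p q : 'I_r -> {poly K}) : good c ->
  (forall i, c i \in C) ->
  \sum_i Tm c p i = \sum_i Tm c q i -> p = q.
Proof.
move=> [nz Hg] HC E; apply: NNPP => Hpq.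
pose p' i := p i - q i.
have E0 : \sum_i Tm c p' i = 0.
  rewrite /Tm; under eq_bigr => i _ do rewrite naevalB mulBl.
  by rewrite sumrB; apply/eqP; rewrite subr_eq0; apply/eqP.
have [i1 Hi1] : exists i, p' i != 0.
  apply: NNPP => H; apply: Hpq; apply: functional_extensionality => i.
  apply/eqP; rewrite -subr_eq0; apply/negPn/negP => Hi; apply: H; by exists i.
pose dd i := ((size (p' i)).-1 * m + dg (c i))%N.
pose A := [pred i | p' i != 0].
have [i2 Ai2 HM] := @eq_bigmax_cond _ A dd (introT card_gt0P (ex_intro _ i1 Hi1)).
have := Hg p' (\max_(i in A) dd i)%:Z.
rewrite E0 chi0 => H; suff : None = Some (Posz (\max_(i in A) dd i)) by [].
apply: H.
- move=> i; case: (chi_Tm c p' i) => [-> //|[pi0 ->]].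
  rewrite (chiC (HC i) (nz i)) /= lez_nat.
  exact: (@leq_bigmax_cond _ A dd i pi0).
- exists i2; case: (chi_Tm c p' i2) => [E2|[pi0 ->]].
    by move: E2; rewrite /Tm chi_evalM // (chiC (HC i2) (nz i2)).
  by rewrite (chiC (HC i2) (nz i2)) /= HM.
Qed.


Lemma pow_in (B : S -> Prop) : is_subalg B -> B a -> forall n, B (a ^^ n).
Proof.
move=> [B1 [BD [BZ BM]]] Ba; elim=> [|n IH] //=; exact: BM.
Qed.

Lemma part1 :
  (forall (k : K) (p q : {poly K}), naeval a (k *: p + q) = k *: naeval a p + naeval a q)
   /\ naeval a 1 = naone S
   /\ (forall p q : {poly K}, naeval a (p * q) = namul (naeval a p) (naeval a q))
   /\ injective (naeval a)
   /\ (forall x, gen_subalg a x <-> exists p, x = naeval a p).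
Proof.
split; first exact: naeval_lin.
split; first exact: naeval1.
split; first exact: naeval_mul.
split; first exact: naeval_inj.
move=> x; split.
  move=> H; apply: (H (fun u => exists p, u = naeval a p)); last by exists (polyX K); rewrite naevalX.
  split; first by exists 1; rewrite naeval1.
  split; first by move=> u v [p ->] [q ->]; exists (p + q); rewrite naevalD.
  split; first by move=> k u [p ->]; exists (k *: p); rewrite naevalZ.
  by move=> u v [p ->] [q ->]; exists (p * q); rewrite naeval_mul.
move=> [p ->] B HB Ba.
have [B1 [BD [BZ BM]]] := HB.
have B0 : B 0 by rewrite -(scale0r (naone S)); apply: BZ.
rewrite /naeval; apply: (big_ind B) => // i _.
by apply: BZ; apply: pow_in.
Qed.

Lemma part2 :
  exists (r : nat) (c : 'I_r -> S),
      (r <= l * m)%N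
      /\ (forall i, c i \in centralizer a)
      /\ (forall x, x \in centralizer a ->
            exists p : 'I_r -> {poly K},
              x = \sum_i namul (naeval a (p i)) (c i))
      /\ (forall p q : 'I_r -> {poly K},
            \sum_i namul (naeval a (p i)) (c i) = \sum_i namul (naeval a (q i)) (c i) ->
            p = q).
Proof.
have [r [c [Hg [HC [_ Hor]]]]] := build (l * m).+1.
have Hb := good_bound Hg HC.
exists r, c; split => //; split => //; split.
  case: Hor => [Er|Hall]; last exact: Hall.
  by exfalso; move: Hb; rewrite Er ltnn.
by move=> p q; apply: good_indep.
Qed.

End Main.

Theorem theorem2p8 (K : fieldType) (S : naalg K) (chi : S -> option int)
    (a : S) (m l : nat) :
  (2%:R : K) != 0 ->
  pseudo_degree chi ->
  in_nucleus a ->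
  chi a = Some (m%:Z) -> (0 < m)%N ->
  (0 < l)%N ->
  condD chi l (centralizer a) ->
  (* K[a] ≅ K[x]: evaluation at a is a K-algebra isomorphism onto K[a] *)
  ((forall (k : K) (p q : {poly K}), naeval a (k *: p + q) = k *: naeval a p + naeval a q)
   /\ naeval a 1 = naone S
   /\ (forall p q : {poly K}, naeval a (p * q) = namul (naeval a p) (naeval a q))
   /\ injective (naeval a)
   /\ (forall x, gen_subalg a x <-> exists p, x = naeval a p))
  /\
  (* C_S(a) is a free left K[a]-module of rank at most l*m *)
  (exists (r : nat) (c : 'I_r -> S),
      (r <= l * m)%N
      /\ (forall i, c i \in centralizer a)
      /\ (forall x, x \in centralizer a ->
            exists p : 'I_r -> {poly K},
              x = \sum_i namul (naeval a (p i)) (c i))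
      /\ (forall p q : 'I_r -> {poly K},
            \sum_i namul (naeval a (p i)) (c i) = \sum_i namul (naeval a (q i)) (c i) ->
            p = q)).
Proof.
move=> _ Hchi Ha Hchia Hm _ HD.
split; [exact: (@part1 K S chi a m l Hchi Ha Hchia Hm HD) | exact: (@part2 K S chi a m l Hchi Ha Hchia Hm HD)].
Qed.
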